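(* Let $p\geq3$ be prime, $n\geq 2$, and $\Phi_{p^n}(T)=\sum_{k=0}^{p-1}T^{p^{n-1}k}$. In the transfinite Newton algorithm applied to $\Phi_{p^n}$: (1) the maximal slope at step $0$ is $s_0=0$ and $1\in\bar{\mathbb{F}}_p$ is a root of the residue polynomial of $\Phi^{(0,n)}=\Phi_{p^n}$; (2) choosing $z_0=1$, the maximal slope of $\mathrm{NP}(\Phi^{(1,n)})$ is $s_1=\frac{1}{p^{n-1}(p-1)}$, and $(-1)^n\zeta_{2(p-1)}$ is a root of the residue polynomial of $\Phi^{(1,n)}$ of multiplicity $p^{n-1}$. Consequently, choosing $z_1=(-1)^n\zeta_{2(p-1)}$, one has $\zeta_{p^n}^{(1)}=1+(-1)^n\zeta_{2(p-1)}\,p^{\frac{1}{p^{n-1}(p-1)}}$.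
   Context: $\mathbb{L}_p$ is the $p$-adic Mal'cev–Neumann field of formal sums $\sum_{x\in\mathbb{Q}}[\alpha_x]p^x$ ($\alpha_x\in\bar{\mathbb{F}}_p$, $[\cdot]$ Teichmüller lift, well-ordered support), valuation $v_p$ = minimum of support, $C_x(\alpha)=\alpha_x$. $\zeta_{2(p-1)}$ is a fixed primitive $2(p-1)$-th root of unity in $\bar{\mathbb{F}}_p$, identified with its Teichmüller lift. For $P(T)=\sum_{k=0}^Na_kT^{N-k}$ ($a_0,a_N\ne0$): $\mathrm{NP}(P)$ is the lower convex hull of $(k,v_p(a_k))$; $m_{\max}$ is the largest breakpoint $<N$; maximal slope $s_{\max}=\frac{v_p(a_N)-v_p(a_{m_{\max}})}{N-m_{\max}}$; residue polynomial $\mathrm{Res}_P(T)=\sum_{k=0}^{N-m_{\max}}C_{v_p(a_{m_{\max}})+s_{\max}(N-m_{\max}-k)}(a_{N-k})T^k$. Algorithm: $\zeta_{p^n}^{(-1)}=0$; for $i\ge0$, $\Phi^{(i,n)}(T)=\Phi_{p^n}(T+\zeta_{p^n}^{(i-1)})$, $s_i$ its maximal slope, $z_i$ a chosen root of $\mathrm{Res}_{\Phi^{(i,n)}}$, and $\zeta_{p^n}^{(i)}=\zeta_{p^n}^{(i-1)}+[z_i]p^{s_i}$. *)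

(* Defs.v *)
From HB Require Import structures.
From mathcomp Require Import all_boot all_order all_algebra.
From mathcomp Require Import boolp.
Set Implicit Arguments. Unset Strict Implicit. Unset Printing Implicit Defensive.
Import Order.TTheory GRing.Theory Num.Theory.
Local Open Scope ring_scope.

(* Teichmueller digits of an integer a, viewed in Z_p (a subring of L_p):  *)
(*   a = sum_{i>=0} [alpha_i] p^i,  alpha_i in F_p.                        *)
(* Digit i is computed modulo p^(i+1): the Teichmueller lift of the class  *)
(* of r mod p is congruent to r^(p^i) modulo p^(i+1); one peels off digits *)
(* r_{j+1} = (r_j - [r_j mod p]) / p (exact division in Z).               *)
(* The result is the representative in {0,..,p-1} of alpha_i.             *)
Fixpoint tdig_aux (p K j : nat) (r : int) : int :=
  match j with
  | 0 => (r %% p%:Z)%Z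
  | j'.+1 => tdig_aux p K j' ((r - ((r %% p%:Z)%Z) ^+ (p ^ K)) %/ p%:Z)%Z
  end.

Definition teich_digit (p : nat) (a : int) (i : nat) : nat :=
  `|tdig_aux p i i a|%N.

(* C_x(a) for a in Z (subset of L_p), x in Q, with value in a field F of
   characteristic p (containing F_p-bar):  the digit at exponent x,
   which is 0 unless x is a nonnegative integer. *)
Definition coefC (F : nzRingType) (p : nat) (x : rat) (a : int) : F :=
  if (denq x == 1) && (0 <= numq x) then (teich_digit p a `|numq x|%N)%:R
  else 0.

Definition vp (p : nat) (a : int) : rat := (logn p `|a|%N)%:R.

(* Newton polygon data for P(T) = sum_{k=0}^N a_k T^(N-k), P in Z[T].     *)
Section NewtonPolygon.
Variables (p : nat) (P : {poly int}).

Definition npN : nat := (size P).-1.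
Definition npa (k : nat) : int := P`_(npN - k).
Definition npv (k : nat) : rat := vp p (npa k).

(* (m, v(a_m)) is a vertex (breakpoint) of the lower convex hull of the
   points (k, v(a_k)), 0 <= k <= N, a_k <> 0: some line through it lies
   strictly below all the other points. *)
Definition np_vertex (m : nat) : Prop :=
  (m <= npN)%N /\ npa m != 0 /\
  exists sigma : rat, forall k : nat, (k <= npN)%N -> npa k != 0 -> k <> m ->
     npv m + sigma * (k%:R - m%:R) < npv k.

Definition m_max : nat := (\max_(m < npN | `[< np_vertex m >]) m)%N.

Definition s_max : rat :=
  (npv npN - npv m_max) / (npN - m_max)%:R.

Definition res_poly (F : nzRingType) : {poly F} :=
  \poly_(k < (npN - m_max).+1)
     coefC F p (npv m_max + s_max * (npN - m_max - k)%:R) (npa (npN - k)).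

End NewtonPolygon.

Definition cyclo_pn (p n : nat) : {poly int} :=
  \sum_(k < p) 'X^(p ^ n.-1 * k).

(* Main.v *)
Require Import Defs.
From HB Require Import structures.
From mathcomp Require Import all_boot all_order all_algebra.
From mathcomp Require Import boolp.
From mathcomp Require Import ring lra zify.
Import Order.TTheory GRing.Theory Num.Theory.
Local Open Scope ring_scope.

Lemma vertex_bound p (P : {poly int}) m : (0 < m < npN P)%N ->
  npa P 0 != 0 -> npa P (npN P) != 0 -> np_vertex p P m ->
  (npN P)%:R * npv p P m < (npN P - m)%:R * npv p P 0 + m%:R * npv p P (npN P).
Proof.
move=> /andP[m0 mN] a0 aN [_ [_ [s Hs]]].
have h0 := Hs 0%N (leq0n _) a0 (elimF eqP (ltn_eqF m0)).
have h1 : npv p P m + s * ((npN P)%:R - m%:R) < npv p P (npN P).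
  apply: Hs => //; first by apply/eqP; rewrite gtn_eqF.
rewrite natrB ?(ltnW mN) //.
have hm : (0 : rat) < m%:R by rewrite ltr0n.
have hNm : (0 : rat) < (npN P)%:R - m%:R by rewrite subr_gt0 ltr_nat.
rewrite sub0r in h0.
nra.
Qed.

Lemma mmax0 p (P : {poly int}) :
  npa P 0 != 0 -> npa P (npN P) != 0 ->
  (forall m, (0 < m < npN P)%N -> npa P m != 0 ->
     (npN P - m)%:R * npv p P 0 + m%:R * npv p P (npN P) <= (npN P)%:R * npv p P m) ->
  m_max p P = 0%N.
Proof.
move=> a0 aN H; rewrite /m_max; apply: big1 => i /asboolP Hv.
apply/eqP; rewrite -leqn0 leqNgt; apply/negP => Hi.
have Hm : (0 < i < npN P)%N by rewrite Hi ltn_ord.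
have := @vertex_bound p P i Hm a0 aN Hv.
case: Hv => _ [ai _].
by rewrite ltNge H.
Qed.

Lemma smax0 p (P : {poly int}) : m_max p P = 0%N ->
  s_max p P = (npv p P (npN P) - npv p P 0) / (npN P)%:R.
Proof. by rewrite /s_max => ->; rewrite subn0. Qed.

Lemma res0 p (P : {poly int}) (F : nzRingType) : m_max p P = 0%N ->
  res_poly p P F = \poly_(k < (npN P).+1)
     Defs.coefC F p (npv p P 0 + s_max p P * (npN P - k)%:R) (P`_k).
Proof.
move=> h; rewrite /res_poly h subn0; apply/polyP => i; rewrite !coef_poly.
case: ifP => // hi; congr Defs.coefC; rewrite /npa subKn //.
Qed.

Lemma frobk (R : comNzRingType) p k (x y : R) : prime p -> p \in [pchar R] ->
  (x + y) ^+ (p ^ k) = x ^+ (p ^ k) + y ^+ (p ^ k).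
Proof.
move=> pp hp; apply: exprDn_pchar.
by rewrite pnatX (pnatE _ pp) hp.
Qed.

Lemma Phi_coef (p q j : nat) : (0 < q)%N -> (j < p)%N ->
  (\sum_(k < p) 'X^(q * k) : {poly int})`_(q * j) = 1.
Proof.
move=> q0 jp; rewrite coef_sum (bigD1 (Ordinal jp)) //= coefXn eqxx.
rewrite big1 ?addr0 // => k hk; rewrite coefXn eqn_pmul2l //.
have : j != k.
  by apply: contraNneq hk => e; apply/eqP/val_inj; rewrite /= e.
by move/negPf => ->.
Qed.

Lemma Phi_size_le (p q : nat) : (0 < p)%N ->
  (size ((\sum_(k < p) 'X^(q * k))%R : {poly int}) <= (q * (p - 1)).+1)%N.
Proof.
move=> p0; apply: leq_trans (size_sum _ _ _) _.
apply/bigmax_leqP => k _; rewrite size_polyXn ltnS leq_mul2l.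
by apply/orP; right; rewrite leq_subRL // addnC addn1 ltn_ord.
Qed.

Lemma Phi_size (p q : nat) : (0 < p)%N -> (0 < q)%N ->
  size (\sum_(k < p) 'X^(q * k) : {poly int}) = (q * (p - 1)).+1.
Proof.
move=> p0 q0; apply/eqP; rewrite eqn_leq Phi_size_le //=.
rewrite ltnNge; apply/negP => /leq_sizeP H.
have := H (q * (p - 1))%N (leqnn _).
by rewrite Phi_coef // subn1 prednK.
Qed.

Lemma coefC0 (F : nzRingType) p (a : int) : prime p -> p \in [pchar F] ->
  Defs.coefC F p 0 a = a%:~R.
Proof.
move=> pp hp; rewrite /Defs.coefC /=.
rewrite /teich_digit /=.
have p0 : (p%:Z != 0) by rewrite eqz_nat -lt0n prime_gt0.
have hm : (a %% p)%Z = `|(a %% p)%Z|%:Z by rewrite gez0_abs // modz_ge0.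
rewrite [in RHS](divz_eq a p) rmorphD rmorphM /=.
have -> : ((p%:Z)%:~R : F) = 0 by rewrite -pmulrn pcharf0.
by rewrite mulr0 add0r [in RHS]hm.
Qed.

Lemma Phi1_mod (F : fieldType) p k : prime p -> p \in [pchar F] ->
  map_poly (intr : int -> F) ((\sum_(j < p) 'X^(p ^ k * j)) \Po ('X + 1%:P))
  = 'X^(p ^ k * (p - 1)).
Proof.
move=> pp hp.
have hpP : p \in [pchar {poly F}] by rewrite pchar_poly.
rewrite map_comp_poly rmorph_sum /= rmorphD /= map_polyX map_polyC /= rmorph1.
rewrite (raddf_sum (comp_poly ('X + 1%:P))) /=.
under eq_bigr do rewrite map_polyXn comp_Xn_poly exprM.
rewrite frobk // expr1n.
set Y := 'X^(p ^ k) + 1.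
have hY : Y - 1 = 'X^(p ^ k) by rewrite /Y addrK.
have e := subrX1 Y p.
have hYp : Y ^+ p = ('X^(p ^ k)) ^+ p + 1.
  by rewrite -{1}(expn1 p) /Y frobk // expn1 expr1n.
have hXp : ('X^(p ^ k) : {poly F}) ^+ p = 'X^(p ^ k) * ('X^(p ^ k)) ^+ (p - 1).
  by rewrite -exprS subn1 prednK // prime_gt0.
rewrite hYp addrK hY hXp in e.
have nz : ('X^(p ^ k) : {poly F}) != 0 by rewrite monic_neq0 // monicXn.
by rewrite -(mulfI nz e) -exprM.
Qed.

Lemma intr_char (F : nzRingType) p (a : int) : p \in [pchar F] ->
  (a%:~R : F) = 0 -> (p %| `|a|)%N.
Proof.
move=> hp; rewrite (dvdn_pcharf hp); case: a => m /=.
  by move=> /eqP.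
by rewrite NegzE mulrNz => /eqP; rewrite oppr_eq0.
Qed.

Lemma coefC_frac (F : nzRingType) p (x : rat) (a : int) : 0 < x < 1 ->
  Defs.coefC F p x a = 0.
Proof.
move=> /andP[x0 x1]; rewrite /Defs.coefC; case: ifP => // /andP[/eqP hd _].
have e := numqE x; rewrite hd mulr1 in e.
rewrite -e ltr0z in x0; rewrite -e ltrz1 in x1.
lia.
Qed.

Lemma coefC_p (F : nzRingType) p : prime p -> Defs.coefC F p 1 p%:Z = 1.
Proof.
move=> pp; rewrite /Defs.coefC /= /teich_digit /=.
have p1 : (1 < p)%N by apply: prime_gt1.
rewrite modzz expn1 expr0n /=.
have -> : (p == 0)%N = false by case: p p1 {pp}.
rewrite subr0 divzz.
have -> : (p%:Z != 0) = true by apply/eqP => e; move: p1; rewrite -[p]/(`|p%:Z|)%N e.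
by rewrite modz_small.
Qed.

Lemma mup_g (F : fieldType) p (y : F) : p \in [pchar F] -> (1 < p)%N ->
  y ^+ (p - 1) = -1 -> mup y ('X^(p - 1) + 1) = 1%N.
Proof.
move=> hp p1 hy.
have p10 : (p - 1 != 0)%N by rewrite subn_eq0 -ltnNge.
set g : {poly F} := 'X^(p - 1) + 1.
have gnz : g != 0.
  apply/eqP => e; have := congr1 (horner^~ 0) e.
  rewrite /g /= hornerD hornerXn hornerC horner0 expr0n (negPf p10) add0r.
  by move/eqP; rewrite oner_eq0.
have hr : root g y by rewrite /root /g hornerD hornerXn hornerC hy addNr.
apply/eqP; rewrite eqn_leq -XsubC_dvd // -root_factor_theorem hr andbT.
rewrite mup_leq //; apply/negP => /dvdpP [h eh].
have := congr1 (fun r => (deriv r).[y]) eh.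
rewrite /g derivM deriv_exp derivD derivXn -polyC1 derivC addr0 /=.
rewrite !hornerE subrr /= !mulr0 addr0 mulr0.
rewrite hornerMn hornerXn -mulr_natr natrB ?(ltnW p1) // (pcharf0 hp) sub0r.
rewrite mulrN1 addr0 => /eqP; rewrite oppr_eq0 expf_eq0 => /andP[_ /eqP y0].
by move: hy; rewrite y0 expr0n (negPf p10) => /eqP; rewrite eq_sym oppr_eq0 oner_eq0.
Qed.

Lemma mup_pow (F : fieldType) (y : F) (g : {poly F}) k : g != 0 ->
  mup y g = 1%N -> mup y (g ^+ k) = k.
Proof.
move=> gnz hg; elim: k => [|k IH].
  by rewrite expr0 mupNroot // /root hornerC oner_eq0.
by rewrite exprS mupM // ?expf_neq0 // hg IH.
Qed.

Lemma g_nz (F : fieldType) k : (0 < k)%N -> ('X^k + 1 : {poly F}) != 0.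
Proof.
move=> k0; apply/eqP => e; have := congr1 (horner^~ 0) e.
rewrite /= hornerD hornerXn hornerC horner0 expr0n.
have -> : (k == 0)%N = false by rewrite eqn0Ngt k0.
by rewrite add0r => /eqP; rewrite oner_eq0.
Qed.

Theorem proposition3p1 (p n : nat) (F : closedFieldType) (zeta : F) :
  prime p -> (3 <= p)%N -> (2 <= n)%N -> p \in [pchar F] ->
  (2 * (p - 1)).-primitive_root zeta ->
  let Phi := cyclo_pn p n in
  (* step 0: zeta^(-1) = 0, Phi^(0,n)(T) = Phi(T + 0) *)
  let Phi0 := Phi \Po ('X + 0%:P) in
  (* step 1 with z_0 = 1, s_0 = 0: zeta^(0) = 0 + [1] p^0 = 1 *)
  let Phi1 := Phi \Po ('X + 1%:P) in
  [/\ s_max p Phi0 = 0,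
      root (res_poly p Phi0 F) 1,
      s_max p Phi1 = 1 / (p ^ n.-1 * (p - 1))%:R,
      root (res_poly p Phi1 F) ((-1) ^+ n * zeta)
    & mup ((-1) ^+ n * zeta) (res_poly p Phi1 F) = (p ^ n.-1)%N].
Proof.
move=> pp p3 n2 hp prim Phi Phi0 Phi1.
have p0 : (0 < p)%N by apply: prime_gt0.
have p1 : (1 < p)%N by apply: prime_gt1.
have q0 : (0 < p ^ n.-1)%N by rewrite expn_gt0 p0.
have N0 : (0 < p ^ n.-1 * (p - 1))%N by rewrite muln_gt0 q0 subn_gt0.
have sz : size Phi = (p ^ n.-1 * (p - 1)).+1 by apply: Phi_size.
have cN : Phi`_(p ^ n.-1 * (p - 1)) = 1 by apply: Phi_coef; rewrite // subn1 prednK.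
have c0 : Phi`_0 = 1 by rewrite -(muln0 (p ^ n.-1)%N); apply: Phi_coef.
have hP1 : Phi.[1] = p%:R.
  rewrite /Phi /cyclo_pn horner_sum.
  under eq_bigr do rewrite hornerXn expr1n.
  by rewrite sumr_const card_ord.
have e0 : Phi0 = Phi by rewrite /Phi0 addr0 comp_polyXr.
have nN0 : npN Phi0 = (p ^ n.-1 * (p - 1))%N by rewrite /npN e0 sz.
have a00 : npa Phi0 0 = 1 by rewrite /npa nN0 subn0 e0.
have a0N : npa Phi0 (npN Phi0) = 1 by rewrite /npa subnn e0.
have v00 : npv p Phi0 0 = 0 by rewrite /npv a00 /vp /= logn1.
have v0N : npv p Phi0 (npN Phi0) = 0 by rewrite /npv a0N /vp /= logn1.
have mm0 : m_max p Phi0 = 0%N.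
  apply: mmax0; rewrite ?a00 ?a0N ?oner_eq0 // => m _ _.
  by rewrite v00 v0N !mulr0 addr0 mulr_ge0 // /npv /vp ler0n.
have s0 : s_max p Phi0 = 0 by rewrite smax0 // v00 v0N subr0 mul0r.
have r0 : root (res_poly p Phi0 F) 1.
  rewrite res0 // s0 v00.
  under eq_poly => k _ do rewrite mul0r addr0 coefC0 //.
  rewrite /root horner_poly.
  under eq_bigr do rewrite expr1n mulr1.
  rewrite -rmorph_sum /= nN0.
  have -> : \sum_(i < (p ^ n.-1 * (p - 1)).+1) Phi0`_i = p%:R.
    rewrite -hP1 e0 (horner_coef_wide _ (eq_leq sz)).
    by apply: eq_bigr => i _; rewrite expr1n mulr1.
  by rewrite natz -pmulrn (pcharf0 hp).
have sz1 : size Phi1 = (p ^ n.-1 * (p - 1)).+1 by rewrite /Phi1 size_comp_poly2 ?size_XaddC.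
have nN1 : npN Phi1 = (p ^ n.-1 * (p - 1))%N by rewrite /npN sz1.
have c1N : Phi1`_(p ^ n.-1 * (p - 1)) = 1.
  have := @lead_coef_comp _ Phi ('X + 1%:P); rewrite size_XaddC => /(_ isT).
  by rewrite lead_coefXaddC expr1n mulr1 /lead_coef -/Phi1 sz1 sz /= cN.
have c10 : Phi1`_0 = p%:R by rewrite -horner_coef0 /Phi1 horner_comp !hornerE hP1.
have a10 : npa Phi1 0 = 1 by rewrite /npa nN1 subn0.
have a1N : npa Phi1 (npN Phi1) = p%:R by rewrite /npa subnn.
have v10 : npv p Phi1 0 = 0 by rewrite /npv a10 /vp /= logn1.
have v1N : npv p Phi1 (npN Phi1) = 1 by rewrite /npv a1N /vp natz /= logn_prime // eqxx.
have hmod := @Phi1_mod F p n.-1 pp hp.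
have dvd1 : forall j, (0 < j < p ^ n.-1 * (p - 1))%N -> (p %| absz (Phi1`_j)%R)%N.
  move=> j /andP[j0 jN]; apply: (@intr_char F p _ hp).
  have := congr1 (fun r : {poly F} => r`_j) hmod; rewrite coef_map /= coefXn (ltn_eqF jN).
  by [].
have mm1 : m_max p Phi1 = 0%N.
  apply: mmax0; rewrite ?a10 ?a1N ?oner_eq0 ?pnatr_eq0 -?lt0n // => m hm am.
  rewrite v10 v1N mulr0 add0r mulr1 /npv /vp -natrM ler_nat.
  move: hm; rewrite nN1 => /andP[m0 mN].
  have hd : (p %| absz (npa Phi1 m))%N.
    by rewrite /npa nN1; apply: dvd1; rewrite subn_gt0 mN /= ltn_subrL m0 N0.
  have hl : (0 < logn p `|npa Phi1 m|)%N.
    by rewrite logn_gt0 mem_primes pp absz_gt0 am hd.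
  by apply: leq_trans (ltnW mN) _; rewrite leq_pmulr.
have s1 : s_max p Phi1 = 1 / (p ^ n.-1 * (p - 1))%:R.
  by rewrite smax0 // v10 v1N subr0 nN1.
set N := (p ^ n.-1 * (p - 1))%N in N0 sz1 nN1 c1N hmod dvd1 s1 *.
have hres : res_poly p Phi1 F = 'X^N + 1.
  rewrite res0 // s1 v10 nN1; apply/polyP => k.
  rewrite coef_poly coefD coefXn coefC.
  case: ltnP => hk; last first.
    by rewrite (gtn_eqF hk) (negPf (lt0n_neq0 (leq_ltn_trans (leq0n _) hk))) add0r.
  have Nnz : (N%:R : rat) != 0 by rewrite pnatr_eq0 -lt0n.
  have [->|k0] := posnP k.
    rewrite subn0 div1r mulVf // add0r c10 natz coefC_p // (ltn_eqF N0).
    by rewrite add0r.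
  have [->|kN] := eqVneq k N.
    by rewrite subnn mulr0 addr0 coefC0 // c1N addr0.
  rewrite addr0 coefC_frac //.
  have kN' : (k < N)%N by rewrite ltn_neqAle kN -ltnS hk.
  apply/andP; split.
    by rewrite div1r add0r; apply: mulr_gt0; rewrite ?invr_gt0 ltr0n // subn_gt0.
  rewrite add0r div1r mulrC ltr_pdivrMr ?ltr0n // mul1r ltr_nat.
  by rewrite ltn_subrL k0 N0.
have hpP : p \in [pchar {poly F}] by rewrite pchar_poly.
have hg : res_poly p Phi1 F = ('X^(p - 1) + 1) ^+ (p ^ n.-1).
  by rewrite hres frobk // expr1n -exprM mulnC.
have podd : odd p by case: (even_prime pp) => // e; rewrite e in p3.
have hz : zeta ^+ (p - 1) = -1.
  have z2 : (zeta ^+ (p - 1)) ^+ 2 == 1 by rewrite -exprM mulnC (prim_expr_order prim).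
  rewrite sqrf_eq1 in z2; case/orP: z2 => /eqP // z1.
  have := prim_order_dvd prim (p - 1); rewrite z1 eqxx => /dvdn_leq.
  rewrite subn_gt0 => /(_ p1) h; exfalso; move: h p1; clear; lia.
have hy : ((-1) ^+ n * zeta) ^+ (p - 1) = -1.
  rewrite exprMn exprAC -signr_odd oddB ?(ltnW p1) // podd /= expr0 expr1n mul1r.
  by rewrite hz.
have gnz : ('X^(p - 1) + 1 : {poly F}) != 0 by apply: g_nz; rewrite subn_gt0.
have hm := @mup_g F p _ hp p1 hy.
rewrite hg; split => //.
  rewrite /root horner_exp hornerD hornerXn hornerC hy addNr expr0n.
  by rewrite eqn0Ngt q0.
by rewrite mup_pow.
Qed.
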